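(* Let $\varepsilon>0$ and let $f$ be continuous on $[0,1]$. Let $u\in H^1_0(0,1)$ be the solution of $$\varepsilon\,(u',v')+(u',v)=(f,v)\quad\text{for all } v\in H^1_0(0,1).$$ Let $n\ge 2$, $h=1/n$, $x_j=jh$ ($j=0,\dots,n$). Let $\mathcal{M}_h\subset H^1_0(0,1)$ be the space of continuous functions on $[0,1]$ that are linear on each $[x_{j-1},x_j]$ and vanish at $0$ and $1$, and let $V_h\subset H^1_0(0,1)$ be the space of continuous functions on $[0,1]$ that are quadratic polynomials on each $[x_{j-1},x_j]$ and vanish at $0$ and $1$. Let $(w_h,u_h)\in V_h\times\mathcal{M}_h$ be the solution of the saddle point least squares ($P^1$–$P^2$) discretization $$\begin{aligned} (w_h',v_h')+\varepsilon\,(u_h',v_h')+(u_h',v_h)&=(f,v_h)&&\text{for all } v_h\in V_h,\\ \varepsilon\,(q_h',w_h')+(q_h',w_h)&=0&&\text{for all } q_h\in\mathcal{M}_h. \end{aligned}$$ For $v\in H^1_0(0,1)$ define $\|v\|_*^2:=\varepsilon^2\|v'\|^2+\|v\|^2-\overline{v}^2$, where $\|\cdot\|$ is the $L^2(0,1)$ norm and $\overline{v}=\int_0^1 v(x)\,dx$. Then $$\|u-u_h\|_*\le \inf_{p_h\in\mathcal{M}_h}\|u-p_h\|_*\le \|u-u_I\|_*,$$ where $u_I\in\mathcal{M}_h$ is the linear interpolant of $u$ at the nodes $x_0,\dots,x_n$.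
   Context: $(\cdot,\cdot)$ denotes the $L^2(0,1)$ inner product. Note $\|v\|^2-\overline{v}^2=\|v-\overline{v}\|^2$, so $\|\cdot\|_*$ is a norm on $H^1_0(0,1)$. *)

(* Defs.v *)
From HB Require Import structures.
From mathcomp Require Import all_boot all_order all_algebra.
From mathcomp Require Import all_classical all_reals all_analysis.
Set Implicit Arguments. Unset Strict Implicit. Unset Printing Implicit Defensive.
Import Order.TTheory GRing.Theory Num.Theory.
Import numFieldNormedType.Exports.
Local Open Scope classical_set_scope.
Local Open Scope ring_scope.

Section Defs.
Context {R : realType}.
Notation mu := (@lebesgue_measure R).

Definition I01 : set R := [set` `[0, 1]%R].

Definition ip (f g : R -> R) : R := \int[mu]_(x in I01) (f x * g x).

Definition l2sq (f : R -> R) : R := ip f f.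

Definition mean (v : R -> R) : R := \int[mu]_(x in I01) v x.

(** In one dimension, H^1_0(0,1) consists exactly of the functions
    v(x) = int_0^x dv with dv in L^2(0,1) and v(1) = 0 (absolutely
    continuous representative); dv is the weak derivative v'. *)
Definition H10 (v dv : R -> R) : Prop :=
  [/\ mu.-integrable I01 (EFin \o dv),
      mu.-integrable I01 (EFin \o (fun x => dv x ^+ 2)),
      (forall x, 0 <= x <= 1 -> v x = \int[mu]_(t in [set` `[0, x]%R]) dv t)
    & v 1 = 0].

Definition star_norm (eps : R) (v dv : R -> R) : R :=
  Num.sqrt (eps ^+ 2 * l2sq dv + l2sq v - mean v ^+ 2).

Definition node (n j : nat) : R := j%:R / n%:R.

Definition in_Mh (n : nat) (v : R -> R) : Prop :=
  [/\ {within I01, continuous v},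
      (forall j : nat, (j < n)%N -> exists a b : R,
         forall x, node n j <= x <= node n j.+1 -> v x = a * x + b),
      v 0 = 0 & v 1 = 0].

Definition in_Vh (n : nat) (v : R -> R) : Prop :=
  [/\ {within I01, continuous v},
      (forall j : nat, (j < n)%N -> exists a b c : R,
         forall x, node n j <= x <= node n j.+1 -> v x = a * x ^+ 2 + b * x + c),
      v 0 = 0 & v 1 = 0].

Definition Mh_errors (eps : R) (n : nat) (u du : R -> R) : set R :=
  [set e | exists p dp : R -> R, [/\ H10 p dp, in_Mh n p &
       e = star_norm eps (fun x => u x - p x) (fun x => du x - dp x)]].

End Defs.

(* Main.v *)
Require Import Defs.
From HB Require Import structures.
From mathcomp Require Import all_boot all_order all_algebra.
From mathcomp Require Import all_classical all_reals all_analysis.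
Import Order.TTheory GRing.Theory Num.Theory.
Import numFieldNormedType.Exports.
Local Open Scope classical_set_scope.
Local Open Scope ring_scope.
From mathcomp Require Import ring lra.
From mathcomp Require Import measurable_realfun.
Set Implicit Arguments. Unset Strict Implicit. Unset Printing Implicit Defensive.
Section A.
Context {R : realType}.
Notation mu := (@lebesgue_measure R).

Lemma mI01 : measurable (I01 : set (measurableTypeR R)).
Proof. exact: measurable_itv. Qed.

Lemma muI01 : mu (I01 : set R) = 1%:E.
Proof. by rewrite /I01 lebesgue_measure_itv /= lte_fin ltr01 oppr0 adde0. Qed.

Definition L2 (f : R -> R) := measurable_fun I01 f /\
  mu.-integrable I01 (EFin \o (fun x => f x ^+ 2)).

Lemma int_cst (c : R) : mu.-integrable I01 (EFin \o (fun _ : R => c)).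
Proof.
apply/integrableP; split; first exact/measurable_EFinP/measurable_cst.
rewrite integral_cst /=; last exact: mI01.
by rewrite muI01 mule1 ltry.
Qed.

Lemma L2_int f : L2 f -> mu.-integrable I01 (EFin \o f).
Proof.
move=> [mf if2].
have i1 : mu.-integrable I01 (EFin \o (fun x => 1 + f x ^+ 2)).
  have := integrableD mI01 (int_cst 1) if2.
  by apply: (eq_integrable mI01) => //= x _; rewrite EFinD.
apply: (le_integrable mI01 _ _ i1); first exact/measurable_EFinP.
move=> x _ /=; rewrite lee_fin (@ger0_norm _ (1 + f x ^+ 2)); last first.
  by rewrite addr_ge0 // sqr_ge0.
by have [h|h] := ger0P (f x); nra.
Qed.


Lemma L2_mul f g : L2 f -> L2 g ->
  mu.-integrable I01 (EFin \o (fun x => f x * g x)).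
Proof.
move=> [mf if2] [mg ig2].
have i1 : mu.-integrable I01 (EFin \o (fun x => f x ^+ 2 + g x ^+ 2)).
  have := integrableD mI01 if2 ig2.
  by apply: (eq_integrable mI01) => //= x _; rewrite EFinD.
apply: (le_integrable mI01 _ _ i1).
  by apply/measurable_EFinP; exact: measurable_funM.
move=> x _ /=; rewrite lee_fin (@ger0_norm _ (f x ^+ 2 + g x ^+ 2)); last first.
  by rewrite addr_ge0 // sqr_ge0.
by rewrite normrM; have [h|h] := ger0P (f x); have [h'|h'] := ger0P (g x); nra.
Qed.

Lemma L2_add f g : L2 f -> L2 g -> L2 (fun x => f x + g x).
Proof.
move=> [mf if2] [mg ig2]; split; first exact: measurable_funD.
have i1 : mu.-integrable I01 (EFin \o (fun x => 2 * (f x ^+ 2 + g x ^+ 2))).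
  have := integrableZl mI01 2 (integrableD mI01 if2 ig2).
  by apply: (eq_integrable mI01) => //= x _; rewrite EFinD EFinM.
apply: (le_integrable mI01 _ _ i1).
  apply/measurable_EFinP; apply: measurable_funX; exact: measurable_funD.
move=> x _ /=; rewrite lee_fin !ger0_norm; last 2 first.
  by rewrite mulr_ge0 // addr_ge0 // sqr_ge0.
  by rewrite sqr_ge0.
have := sqr_ge0 (f x - g x); nra.
Qed.

Lemma L2_scale (c : R) f : L2 f -> L2 (fun x => c * f x).
Proof.
move=> [mf if2]; split; first exact: measurable_funM.
have := integrableZl mI01 (c ^+ 2) if2.
by apply: (eq_integrable mI01) => //= x _; rewrite -EFinM exprMn.
Qed.

Lemma L2_cont f : {within I01, continuous f} -> L2 f.
Proof.
move=> cf; split.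
  by apply: subspace_continuous_measurable_fun => //; exact: mI01.
apply: continuous_compact_integrable; first exact: segment_compact.
by move=> x; apply: cvgM; exact: cf.
Qed.

End A.
Section B.
Context {R : realType}.
Notation mu := (@lebesgue_measure R).

Lemma ipC (f g : R -> R) : ip f g = ip g f.
Proof. by apply: eq_Rintegral => x _; rewrite mulrC. Qed.

Lemma ipDl (f g h : R -> R) : L2 f -> L2 g -> L2 h ->
  ip (fun x => f x + g x) h = ip f h + ip g h.
Proof.
move=> Lf Lg Lh; rewrite /ip -RintegralD; first 1 last.
- exact: mI01.
- exact: L2_mul.
- exact: L2_mul.
by apply: eq_Rintegral => x _; rewrite mulrDl.
Qed.

Lemma ipZl (c : R) (f h : R -> R) : L2 f -> L2 h ->
  ip (fun x => c * f x) h = c * ip f h.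
Proof.
move=> Lf Lh; rewrite /ip -RintegralZl; first 1 last.
- exact: mI01.
- exact: L2_mul.
by apply: eq_Rintegral => x _; rewrite mulrA.
Qed.

Lemma meanD (f g : R -> R) : L2 f -> L2 g ->
  mean (fun x => f x + g x) = mean f + mean g.
Proof. by move=> Lf Lg; rewrite /mean RintegralD //; [exact: mI01|exact: L2_int..]. Qed.

Lemma meanZ (c : R) (f : R -> R) : L2 f -> mean (fun x => c * f x) = c * mean f.
Proof. by move=> Lf; rewrite /mean RintegralZl //; [exact: mI01|exact: L2_int]. Qed.

Definition AC (a da : R -> R) := [/\ mu.-integrable I01 (EFin \o da),
  mu.-integrable I01 (EFin \o (fun x => da x ^+ 2)) &
  forall x, 0 <= x <= 1 -> a x = \int[mu]_(t in [set` `[0, x]%R]) da t].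

Lemma H10_AC a da : H10 a da -> AC a da /\ a 1 = 0.
Proof. by case. Qed.

Lemma AC_H10 a da : AC a da -> a 1 = 0 -> H10 a da.
Proof. by case. Qed.

Lemma AC_L2d a da : AC a da -> L2 da.
Proof. by case=> i1 i2 _; split => //; apply/measurable_EFinP; exact: measurable_int i1. Qed.

Lemma AC_cont a da : AC a da -> {within I01, continuous a}.
Proof.
case=> i1 _ ha.
have := @parameterized_integral_continuous R 0 1 da ler01 i1.
apply: subspace_eq_continuous => x; rewrite inE /= in_itv /= => hx.
by rewrite /from_subspace /= ha.
Qed.

Lemma AC_L2 a da : AC a da -> L2 a.
Proof. by move=> /AC_cont; exact: L2_cont. Qed.

Lemma AC_0 a da : AC a da -> a 0 = 0.
Proof.
case=> _ _ ->; last by rewrite lexx ler01.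
by rewrite set_itv1 Rintegral_set1.
Qed.

Lemma AC_1 a da : AC a da -> a 1 = mean da.
Proof. by case=> _ _ ->; rewrite ?ler01 ?lexx. Qed.

End B.
Section C.
Context {R : realType}.
Notation mu := (@lebesgue_measure R).

Lemma sub0x (x : R) : x <= 1 -> [set` `[0, x]%R] `<=` (I01 : set R).
Proof. by move=> x1; apply: subset_itvl; rewrite bnd_simp. Qed.

Lemma int0x (f : R -> R) x : x <= 1 -> mu.-integrable I01 (EFin \o f) ->
  mu.-integrable [set` `[0, x]%R] (EFin \o f).
Proof. by move=> x1; apply: integrableS; [exact: mI01|exact: measurable_itv|exact: sub0x]. Qed.

Lemma AC_add (a da b db : R -> R) : AC a da -> AC b db ->
  AC (fun x => a x + b x) (fun x => da x + db x).
Proof.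
move=> ACa ACb; have [ia _ ha] := ACa; have [ib _ hb] := ACb.
split.
- have := integrableD mI01 ia ib.
  by apply: (eq_integrable mI01) => //= x _; rewrite EFinD.
- by case: (L2_add (AC_L2d ACa) (AC_L2d ACb)).
- move=> x /andP[x0 x1]; rewrite ha ?x0 ?x1 // hb ?x0 ?x1 // RintegralD //; exact: int0x.
Qed.

Lemma AC_scale (c : R) (a da : R -> R) : AC a da -> AC (fun x => c * a x) (fun x => c * da x).
Proof.
move=> ACa; have [ia _ ha] := ACa.
split.
- have := integrableZl mI01 c ia.
  by apply: (eq_integrable mI01) => //= x _; rewrite EFinM.
- by case: (L2_scale c (AC_L2d ACa)).
- move=> x /andP[x0 x1]; rewrite ha ?x0 ?x1 // RintegralZl //; exact: int0x.
Qed.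

Lemma AC_id : AC (fun x : R => x) (fun _ => 1).
Proof.
split; [exact: int_cst|exact: int_cst|].
move=> x /andP[x0 x1]; rewrite Rintegral_cst; last exact: measurable_itv.
have E := @lebesgue_measure_itv R `[0, x]%R.
rewrite mul1r (_ : fine _ = fine (if (0%:E < x%:E)%E then (x - 0)%:E else 0%E)); last first.
  by congr fine; exact: E.
rewrite lte_fin; case: ltP => [_|]; rewrite ?subr0 //= => h.
by apply/eqP; rewrite eq_le x0 h.
Qed.

Lemma AC_prim (d : R -> R) : {within I01, continuous d} ->
  AC (fun x => \int[mu]_(t in [set` `[0, x]%R]) d t) d.
Proof.
move=> cd; have Ld := L2_cont cd.
by split => //; [exact: L2_int|case: Ld].
Qed.

End C.
Section D.
Context {R : realType}.
Notation mu := (@lebesgue_measure R).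
Let T := measurableTypeR R.

Lemma ind_le (z : T * T) :
  \1_[set z : T * T | (z.2 : R) <= z.1] z = (((z.2 : R) <= z.1)%R%:R : R).
Proof. by rewrite indicE; congr (_%:R); rewrite mem_setE. Qed.

Lemma ind_lt (z : T * T) :
  \1_[set z : T * T | (z.1 : R) < z.2] z = (((z.1 : R) < z.2)%R%:R : R).
Proof. by rewrite indicE; congr (_%:R); rewrite mem_setE. Qed.

Lemma mdiff : measurable_fun [set: (T * T)%type] (fun z : T * T => (z.1 : R) - z.2).
Proof. apply: measurable_funB. exact: measurable_fst. exact: measurable_snd. Qed.

Lemma mA1 : measurable [set z : T * T | (z.2 : R) <= z.1].
Proof.
rewrite (_ : [set z | _] = setT `&` ((fun z : T * T => (z.1 : R) - z.2) @^-1` [set` `[0, +oo[%R])).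
  by apply: mdiff => //.
apply/seteqP; split => z /=; rewrite in_itv /= andbT subr_ge0.
  by [].
by case.
Qed.

Lemma mA2 : measurable [set z : T * T | (z.1 : R) < z.2].
Proof.
rewrite (_ : [set z | _] = setT `&` ((fun z : T * T => (z.1 : R) - z.2) @^-1` [set` `]-oo, 0[%R])).
  by apply: mdiff => //.
apply/seteqP; split => z /=; rewrite in_itv /= subr_lt0.
  by [].
by case.
Qed.

Lemma mfst (F : T -> R) : measurable_fun setT F ->
  measurable_fun [set: (T * T)%type] (fun z : T * T => F z.1).
Proof. by move=> mF; have := measurableT_comp mF (@measurable_fst _ _ T T). Qed.

Lemma msnd (F : T -> R) : measurable_fun setT F ->
  measurable_fun [set: (T * T)%type] (fun z : T * T => F z.2).
Proof. by move=> mF; have := measurableT_comp mF (@measurable_snd _ _ T T). Qed.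

Local Open Scope ereal_scope.

Variables (F G : T -> R).
Hypotheses (iF : mu.-integrable setT (EFin \o F)) (iG : mu.-integrable setT (EFin \o G)).

Let mF : measurable_fun setT F.
Proof. by apply/measurable_EFinP; exact: measurable_int iF. Qed.
Let mG : measurable_fun setT G.
Proof. by apply/measurable_EFinP; exact: measurable_int iG. Qed.

Definition K (z : T * T) : R := (F z.1 * G z.2)%R.
Definition K1 (z : T * T) : R := (F z.1 * G z.2 * \1_[set z : T * T | (z.2 : R) <= z.1] z)%R.
Definition K2 (z : T * T) : R := (F z.1 * G z.2 * \1_[set z : T * T | (z.1 : R) < z.2] z)%R.

Lemma mK : measurable_fun setT K.
Proof. by apply: measurable_funM; [exact: mfst|exact: msnd]. Qed.

Lemma mK1 : measurable_fun setT K1.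
Proof. apply: measurable_funM; first exact: mK. exact: measurable_indic mA1. Qed.

Lemma mK2 : measurable_fun setT K2.
Proof. apply: measurable_funM; first exact: mK. exact: measurable_indic mA2. Qed.

Lemma iK : (mu \x mu).-integrable setT (EFin \o K).
Proof.
apply/integrable12ltyP; first by apply/measurable_EFinP; exact: mK.
have [_ hF] := integrableP _ _ _ iF.
have [_ hG] := integrableP _ _ _ iG.
have mGa : measurable_fun setT (fun y => `|(G y)%:E|).
  by apply: measurableT_comp => //; apply/measurable_EFinP.
have mFa : measurable_fun setT (fun y => `|(F y)%:E|).
  by apply: measurableT_comp => //; apply/measurable_EFinP.
have h x : \int[mu]_y `|(EFin \o K) (x, y)| = `|(F x)%:E| * \int[mu]_y `|(G y)%:E|.
  rewrite -ge0_integralZl //.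
  by apply: eq_integral => y _; rewrite -abseM -EFinM.
under eq_integral do rewrite h.
rewrite ge0_integralZr //; last exact: integral_ge0.
apply: lte_mul_pinfty => //; first exact: integral_ge0.
by rewrite ge0_fin_numE //; exact: integral_ge0.
Qed.

Lemma iK1 : (mu \x mu).-integrable setT (EFin \o K1).
Proof.
apply: (le_integrable measurableT _ _ iK); first by apply/measurable_EFinP; exact: mK1.
move=> z _; rewrite /= lee_fin /K1 normrM indicE.
by case: (_ \in _); rewrite ?normr0 ?normr1 ?mulr1 ?mulr0 ?normr0 ?normr_ge0.
Qed.

Lemma iK2 : (mu \x mu).-integrable setT (EFin \o K2).
Proof.
apply: (le_integrable measurableT _ _ iK); first by apply/measurable_EFinP; exact: mK2.
move=> z _; rewrite /= lee_fin /K2 normrM indicE.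
by case: (_ \in _); rewrite ?normr0 ?normr1 ?mulr1 ?mulr0 ?normr0 ?normr_ge0.
Qed.

Lemma KS z : (K1 z + K2 z = K z)%R.
Proof.
rewrite /K1 /K2 ind_le ind_lt -mulrDr.
by case: leP => _; rewrite /= ?mulr1 ?mulr0 ?addr0 ?add0r ?mulr1.
Qed.

Lemma prodE : \int[mu \x mu]_z (K1 z)%:E + \int[mu \x mu]_z (K2 z)%:E =
  \int[mu]_x (F x)%:E * \int[mu]_y (G y)%:E.
Proof.
rewrite -integralD //; [|exact: iK1|exact: iK2].
rewrite (eq_integral (EFin \o K)); last by move=> z _; rewrite -EFinD KS.
rewrite -(integral12_prod_meas1 iK) /fubini_F.
rewrite (eq_integral (fun x => (F x)%:E * \int[mu]_y (G y)%:E)); last first.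
  by move=> x _; rewrite -integralZl //; apply: eq_integral => y _; rewrite -EFinM.
have hG := integrable_fin_num measurableT iG.
rewrite -(fineK hG) integralZr //.
Qed.

Lemma fub1 : \int[mu]_x \int[mu]_y (K1 (x, y))%:E = \int[mu \x mu]_z (K1 z)%:E.
Proof. exact: (integral12_prod_meas1 iK1). Qed.

Lemma fub2 : \int[mu]_y \int[mu]_x (K2 (x, y))%:E = \int[mu \x mu]_z (K2 z)%:E.
Proof. exact: (integral21_prod_meas1 iK2). Qed.

End D.
Section E.
Context {R : realType}.
Notation mu := (@lebesgue_measure R).
Let T := measurableTypeR R.

Lemma pointR : (point : R) = 0.
Proof. by []. Qed.

Lemma memI01 (x : R) : (x \in (I01 : set R)) = (0 <= x <= 1).
Proof. by rewrite /I01 mem_setE in_itv. Qed.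

Lemma mem0x (x t : R) : (t \in [set` `[0, x]%R]) = (0 <= t <= x).
Proof. by rewrite mem_setE in_itv. Qed.

Lemma mem0xo (x t : R) : (t \in [set` `[0, x[%R]) = (0 <= t < x).
Proof. by rewrite mem_setE in_itv. Qed.

Lemma restr_int (f : R -> R) : mu.-integrable I01 (EFin \o f) ->
  mu.-integrable setT (EFin \o (f \_ I01 : T -> R)).
Proof.
move=> i; have := (integrable_mkcond _ mI01).1 i.
by rewrite restrict_EFin.
Qed.

Lemma mitv (i : interval R) : measurable ([set` i] : set T).
Proof. exact: measurable_itv. Qed.

Lemma int0x_setT (f : R -> R) (x : R) : x <= 1 -> mu.-integrable I01 (EFin \o f) ->
  mu.-integrable setT (EFin \o (f \_ [set` `[0, x]%R] : T -> R)).
Proof.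
move=> x1 i; have := (integrable_mkcond _ (mitv `[0, x]%R)).1 (int0x x1 i).
by rewrite restrict_EFin.
Qed.

Lemma Rint_setT (f : R -> R) (D : set R) : measurable (D : set T) ->
  mu.-integrable D (EFin \o f) ->
  ((\int[mu]_(x in D) f x)%:E = \int[mu]_y ((f \_ D) y)%:E)%E.
Proof.
move=> mD i; rewrite /Rintegral fineK; last exact: integrable_fin_num.
by rewrite integral_mkcond restrict_EFin.
Qed.

Local Open Scope ereal_scope.

Lemma E1 (da b db : R -> R) : AC b db -> mu.-integrable I01 (EFin \o da) ->
  \int[mu]_(x in I01) (da x * b x)%:E =
  \int[mu]_x \int[mu]_y (K1 (da \_ I01) (db \_ I01) (x, y))%:E.
Proof.
move=> [ib _ hb] ia.
rewrite integral_mkcond; apply: eq_integral => x _.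
rewrite patchE memI01.
have [hx|hx] := boolP (0 <= x <= 1)%R; last first.
  apply/esym/integral0_eq => y _.
  by rewrite /K1 /= patchE memI01 (negbTE hx) !mul0r.
have /andP[x0 x1] := hx.
rewrite hb // EFinM Rint_setT //; last exact: int0x.
rewrite -integralZl //; last exact: int0x_setT.
apply: eq_integral => y _.
rewrite /K1 ind_le /= !patchE !memI01 mem0x hx -EFinM; congr EFin.
rewrite pointR.
have [y0|y0] := leP 0%R y; have [yx|yx] := leP y x => /=.
- have -> : (y <= 1)%R by apply: le_trans yx x1.
  by rewrite mulr1.
- by rewrite !mulr0.
- by rewrite mulr1 mulr0.
- by rewrite !mulr0.
Qed.

Lemma intS01 (f : R -> R) (i : interval R) : [set` i] `<=` I01 ->
  mu.-integrable I01 (EFin \o f) -> mu.-integrable [set` i] (EFin \o f).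
Proof. by move=> s; apply: integrableS; [exact: mI01|exact: mitv|exact: s]. Qed.

Lemma intS01_setT (f : R -> R) (i : interval R) : [set` i] `<=` I01 ->
  mu.-integrable I01 (EFin \o f) ->
  mu.-integrable setT (EFin \o (f \_ [set` i] : T -> R)).
Proof.
move=> s i1; have := (integrable_mkcond _ (mitv i)).1 (intS01 s i1).
by rewrite restrict_EFin.
Qed.

Lemma sub0xo (x : R) : (x <= 1)%R -> [set` `[0, x[%R] `<=` (I01 : set R).
Proof.
move=> x1 t; rewrite /I01 /= !in_itv /= => /andP[t0 tx].
by rewrite t0 /=; exact: (le_trans (ltW tx) x1).
Qed.

Lemma E2 (a da db : R -> R) : AC a da -> mu.-integrable I01 (EFin \o db) ->
  \int[mu]_(t in I01) (a t * db t)%:E =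
  \int[mu]_y \int[mu]_x (K2 (da \_ I01) (db \_ I01) (x, y))%:E.
Proof.
move=> [ia _ ha] ib.
rewrite integral_mkcond; apply: eq_integral => y _.
rewrite patchE memI01.
have [hy|hy] := boolP (0 <= y <= 1)%R; last first.
  apply/esym/integral0_eq => x _.
  by rewrite /K2 /= !patchE !memI01 (negbTE hy) pointR mulr0 mul0r.
have /andP[y0 y1] := hy.
rewrite ha // -Rintegral_itv_bndo_bndc; last exact: intS01 (sub0xo y1) ia.
rewrite EFinM Rint_setT //; last exact: intS01 (sub0xo y1) ia.
rewrite -integralZr //; last exact: intS01_setT (sub0xo y1) ia.
apply: eq_integral => x _.
rewrite /K2 ind_lt /= !patchE !memI01 mem0xo hy -EFinM; congr EFin.
rewrite pointR.
have [x0|x0] := leP 0%R x; have [xy|xy] := ltP x y => /=.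
- have -> : (x <= 1)%R by apply: le_trans (ltW xy) y1.
  by rewrite mulr1.
- by rewrite !mulr0 !mul0r.
- by rewrite !mul0r.
- by rewrite !mul0r.
Qed.

End E.
Section Fs.
Context {R : realType}.
Notation mu := (@lebesgue_measure R).

Lemma IBP (a da b db : R -> R) : AC a da -> AC b db ->
  ip da b + ip a db = a 1 * b 1.
Proof.
move=> ACa ACb.
have [ia _ _] := ACa; have [ib _ _] := ACb.
have iF := restr_int ia; have iG := restr_int ib.
have hsum : (\int[mu]_(x in I01) (da x * b x)%:E +
             \int[mu]_(x in I01) (a x * db x)%:E = (a 1 * b 1)%:E)%E.
  rewrite (E1 ACb ia) (E2 ACa ib) (fub1 iF iG) (fub2 iF iG) (prodE iF iG).
  by rewrite (AC_1 ACa) (AC_1 ACb) /mean EFinM !Rint_setT //; exact: mI01.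
have f1 : (\int[mu]_(x in I01) (da x * b x)%:E \is a fin_num)%E.
  by apply: integrable_fin_num; [exact: mI01|exact: L2_mul (AC_L2d ACa) (AC_L2 ACb)].
have f2 : (\int[mu]_(x in I01) (a x * db x)%:E \is a fin_num)%E.
  by apply: integrable_fin_num; [exact: mI01|exact: L2_mul (AC_L2 ACa) (AC_L2d ACb)].
by rewrite /ip /Rintegral -fineD // hsum.
Qed.

End Fs.
Section G.
Context {R : realType}.
Notation mu := (@lebesgue_measure R).
Lemma dF (a b x : R) : derive1 (fun t : R => a / 2 * t ^+ 2 + b * t) x = a * x + b.
Proof. rewrite derive1E. rewrite derive_val. rewrite /GRing.scale /= !mulr1. by field.
Qed.
Lemma cF (a b : R) : continuous (fun t : R => a * t + b).
Proof. by move=> t; apply: cvgD; [apply: cvgM; [exact: cvg_cst|exact: cvg_id]|exact: cvg_cst]. Qed.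

Lemma cF2 (a b : R) : continuous (fun t : R => a / 2 * t ^+ 2 + b * t).
Proof.
move=> t; apply: cvgD; apply: cvgM; try exact: cvg_cst.
  by apply: cvgM; exact: cvg_id.
exact: cvg_id.
Qed.

Lemma tFTC (a b c x : R) : c < x ->
  \int[mu]_(t in [set` `[c, x]%R]) (a * t + b) = a / 2 * (x ^+ 2 - c ^+ 2) + b * (x - c).
Proof.
move=> cx.
rewrite /Rintegral (continuous_FTC2 (F := fun t : R => a / 2 * t ^+ 2 + b * t)) //.
- by rewrite -EFinB /=; ring.
- by apply: continuous_subspaceT; exact: cF.
- split.
  + by move=> t _; exact: ex_derive.
  + by apply: cvg_at_right_filter; exact: cF2.
  + by apply: cvg_at_left_filter; exact: cF2.
- by move=> t _; rewrite dF.
Qed.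
Lemma prim_quad (d : R -> R) (c e a b : R) : 0 <= c -> e <= 1 ->
  {within I01, continuous d} -> (forall x, c <= x <= e -> d x = a * x + b) ->
  forall x, c <= x <= e ->
  \int[mu]_(t in [set` `[0, x]%R]) d t =
  a / 2 * x ^+ 2 + b * x + (\int[mu]_(t in [set` `[0, c]%R]) d t - a / 2 * c ^+ 2 - b * c).
Proof.
move=> c0 e1 cd hd x /andP[cx xe].
have x1 : x <= 1 by apply: le_trans xe e1.
have id := L2_int (L2_cont cd).
move: cx; rewrite le_eqVlt => /predU1P[<-|cx]; first by ring.
have := @Rintegral_itvB R d (BLeft 0) (BRight x) c (int0x x1 id).
rewrite !bnd_simp => /(_ c0 (ltW cx)) h.
have ih : mu.-integrable [set` `]c, x]%R] (EFin \o d).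
  apply: intS01 id => t /=; rewrite /I01 /= !in_itv /= => /andP[ct tx].
  by rewrite (le_trans c0 (ltW ct)) (le_trans tx x1).
rewrite Rintegral_itv_obnd_cbnd // in h.
rewrite (@eq_Rintegral _ _ _ mu [set` `[c, x]%R] (fun t => a * t + b) d) in h; last first.
  move=> t; rewrite inE /= in_itv /= => /andP[ct tx]; apply: hd.
  by rewrite ct (le_trans tx xe).
rewrite tFTC // in h.
have -> : \int[mu]_(t in [set` `[0, x]%R]) d t =
  \int[mu]_(t in [set` `[0, c]%R]) d t + (a / 2 * (x ^+ 2 - c ^+ 2) + b * (x - c)).
  by rewrite -h; ring.
ring.
Qed.

End G.
Section H.
Context {R : realType}.
Notation mu := (@lebesgue_measure R).

Lemma ipDr (f g h : R -> R) : L2 f -> L2 g -> L2 h ->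
  ip h (fun x => f x + g x) = ip h f + ip h g.
Proof. by move=> Lf Lg Lh; rewrite ipC ipDl // (ipC f) (ipC g). Qed.

Lemma ipZr (c : R) (f h : R -> R) : L2 f -> L2 h ->
  ip h (fun x => c * f x) = c * ip h f.
Proof. by move=> Lf Lh; rewrite ipC ipZl // ipC. Qed.

Lemma ipBl (f g h : R -> R) : L2 f -> L2 g -> L2 h ->
  ip (fun x => f x - g x) h = ip f h - ip g h.
Proof.
move=> Lf Lg Lh; rewrite /ip -RintegralB; first 1 last.
- exact: mI01.
- exact: L2_mul.
- exact: L2_mul.
by apply: eq_Rintegral => x _; rewrite mulrBl.
Qed.

Lemma ip_one (f : R -> R) : ip f (fun _ => 1) = mean f.
Proof. by apply: eq_Rintegral => x _; rewrite mulr1. Qed.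

Lemma int01_cst (c : R) : \int[mu]_(x in I01) c = c.
Proof.
rewrite Rintegral_cst; last exact: mI01.
rewrite (_ : fine _ = fine (1%:E : \bar R)) ?mulr1 //.
by congr fine; exact: muI01.
Qed.

Lemma L2_1 : L2 (fun _ : R => 1).
Proof. by split; [exact: measurable_cst|exact: int_cst]. Qed.

Lemma var_ge0 (f : R -> R) : L2 f -> mean f ^+ 2 <= l2sq f.
Proof.
move=> Lf; set m := mean f.
have h0 : 0 <= \int[mu]_(x in I01) ((f x - m) ^+ 2).
  by apply: Rintegral_ge0 => x _; exact: sqr_ge0.
have Lm : L2 (fun x => (-2 * m) * f x) by exact: L2_scale.
rewrite (@eq_Rintegral _ _ _ mu _ (fun x => f x * f x + ((-2 * m) * f x + m ^+ 2))) in h0;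
  last by move=> x _; ring.
rewrite RintegralD in h0; first 1 last.
- exact: mI01.
- exact: L2_mul.
- have := integrableD mI01 (L2_int Lm) (int_cst (m ^+ 2)).
  by apply: (eq_integrable mI01) => //= x _; rewrite EFinD.
rewrite RintegralD in h0; first 1 last.
- exact: mI01.
- exact: L2_int.
- exact: int_cst.
rewrite RintegralZl in h0; first 1 last.
- exact: mI01.
- exact: L2_int.
rewrite int01_cst in h0.
rewrite /l2sq /ip; move: h0; rewrite -/m /mean -/(mean f) -/m.
by move=> h0; nra.
Qed.

Lemma AC_ext (a da a' da' : R -> R) : (forall x, a x = a' x) -> (forall x, da x = da' x) ->
  AC a da -> AC a' da'.
Proof.
move=> ha hda; have -> : a' = a by apply/funext => x; rewrite ha.
by have -> : da' = da by apply/funext => x; rewrite hda.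
Qed.

End H.
Section M.
Context {R : realType}.
Notation mu := (@lebesgue_measure R).

Lemma ip3 (h a b c : R -> R) (k1 k2 k3 : R) : L2 h -> L2 a -> L2 b -> L2 c ->
  ip h (fun x => k1 * a x + k2 * b x + k3 * c x) = k1 * ip h a + k2 * ip h b + k3 * ip h c.
Proof.
move=> Lh La Lb Lc.
rewrite (ipDr (f := fun x => k1 * a x + k2 * b x) (g := fun x => k3 * c x)) //; last first.
- exact: L2_scale.
- by apply: L2_add; exact: L2_scale.
rewrite (ipDr (f := fun x => k1 * a x) (g := fun x => k2 * b x)) //; try exact: L2_scale.
by rewrite !ipZr.
Qed.

Lemma ipsq_ge0 (f : R -> R) : 0 <= ip f f.
Proof. by apply: Rintegral_ge0 => x _; rewrite -expr2 sqr_ge0. Qed.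

Lemma node_ge0 n j : 0 <= node n j :> R.
Proof. by rewrite /node divr_ge0. Qed.

Lemma node_le1 n j : (0 < n)%N -> (j <= n)%N -> node n j <= 1 :> R.
Proof.
move=> n0 jn; rewrite /node ler_pdivrMr ?ltr0n // mul1r.
by rewrite ler_nat.
Qed.

Lemma in_Mh_sub n (a b da db : R -> R) : AC (fun x => a x - b x) (fun x => da x - db x) ->
  in_Mh n a -> in_Mh n b -> in_Mh n (fun x => a x - b x).
Proof.
move=> ACd [_ pa a0 a1] [_ pb b0 b1]; split.
- exact: AC_cont ACd.
- move=> j jn; have [a1' [b1' h1]] := pa j jn; have [a2' [b2' h2]] := pb j jn.
  exists (a1' - a2'), (b1' - b2') => x hx; rewrite h1 // h2 //; ring.
- by rewrite a0 b0 subr0.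
- by rewrite a1 b1 subr0.
Qed.

Lemma w_prop n (eps : R) (d dd : R -> R) : (0 < n)%N -> AC d dd -> in_Mh n d ->
  H10 (fun x => eps * d x + (-1) * (\int[mu]_(t in [set` `[0, x]%R]) d t) + mean d * x)
      (fun x => eps * dd x + (-1) * d x + mean d * 1)
  /\ in_Vh n (fun x => eps * d x + (-1) * (\int[mu]_(t in [set` `[0, x]%R]) d t) + mean d * x).
Proof.
move=> n0 ACd Md; have [cd pd d0 d1] := Md.
have ACD := AC_prim cd.
have ACw := AC_add (AC_add (AC_scale eps ACd) (AC_scale (-1) ACD)) (AC_scale (mean d) AC_id).
have w1 : eps * d 1 + (-1) * (\int[mu]_(t in [set` `[0, 1]%R]) d t) + mean d * 1 = 0.
  by rewrite d1 (AC_1 ACD); ring.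
split; first exact: AC_H10 ACw w1.
split => //.
- exact: AC_cont ACw.
- move=> j jn; have [a [b hab]] := pd j jn.
  have hq := prim_quad (node_ge0 n j) (node_le1 n0 jn) cd hab.
  exists (- (a / 2)), (eps * a - b + mean d),
    (eps * b - (\int[mu]_(t in [set` `[0, node n j]%R]) d t - a / 2 * node n j ^+ 2 - b * node n j)).
  by move=> x hx; rewrite hab // hq //; ring.
- by rewrite d0 (AC_0 ACD); ring.
Qed.

End M.
Section N.
Context {R : realType}.
Notation mu := (@lebesgue_measure R).

Lemma best_approx (eps : R) (f u du : R -> R) (n : nat) (wh dwh uh duh p dp : R -> R) :
  0 < eps -> H10 u du ->
  (forall v dv : R -> R, H10 v dv -> eps * ip du dv + ip du v = ip f v) ->
  (0 < n)%N ->
  H10 wh dwh -> H10 uh duh -> in_Mh n uh ->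
  (forall v dv : R -> R, H10 v dv -> in_Vh n v ->
     ip dwh dv + eps * ip duh dv + ip duh v = ip f v) ->
  (forall q dq : R -> R, H10 q dq -> in_Mh n q ->
     eps * ip dq dwh + ip dq wh = 0) ->
  H10 p dp -> in_Mh n p ->
  star_norm eps (fun x => u x - uh x) (fun x => du x - duh x)
  <= star_norm eps (fun x => u x - p x) (fun x => du x - dp x).
Proof.
move=> eps0 Hu hu n0 Hwh Huh Muh hdisc hq Hp Mp.
have [ACu u1] := H10_AC Hu; have [ACwh wh1] := H10_AC Hwh.
have [ACuh uh1] := H10_AC Huh; have [ACp p1] := H10_AC Hp.
set e := fun x => u x - uh x; set de := fun x => du x - duh x.
set d := fun x => uh x - p x; set dd := fun x => duh x - dp x.
have ACe : AC e de.
  by apply: (AC_ext _ _ (AC_add ACu (AC_scale (-1) ACuh))) => x; rewrite /e /de; ring.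
have ACd : AC d dd.
  by apply: (AC_ext _ _ (AC_add ACuh (AC_scale (-1) ACp))) => x; rewrite /d /dd; ring.
have e1 : e 1 = 0 by rewrite /e u1 uh1 subr0.
have d1 : d 1 = 0 by rewrite /d uh1 p1 subr0.
have Md : in_Mh n d := in_Mh_sub ACd Muh Mp.
have Hd : H10 d dd := AC_H10 ACd d1.
have [Hw Vw] := w_prop eps n0 ACd Md.
have [ACw _] := H10_AC Hw.
set D := fun x => \int[mu]_(t in [set` `[0, x]%R]) d t.
have ACD : AC D d := AC_prim (AC_cont ACd).
set md := mean d.
set w := fun x => eps * d x + (-1) * D x + md * x.
set dw := fun x => eps * dd x + (-1) * d x + md * 1.
have Le := AC_L2 ACe; have Lde := AC_L2d ACe; have Ld := AC_L2 ACd; have Ldd := AC_L2d ACd.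
have Lu := AC_L2 ACu; have Ldu := AC_L2d ACu; have Luh := AC_L2 ACuh; have Lduh := AC_L2d ACuh.
have Lwh := AC_L2 ACwh; have Ldwh := AC_L2d ACwh; have LD := AC_L2 ACD.
have Lw := AC_L2 ACw; have Ldw := AC_L2d ACw.
have Lid : L2 (fun x : R => x) := AC_L2 AC_id.
have L1 := @L2_1 R.
have hA := hu w dw Hw.
have hB := hdisc w dw Hw Vw.
have hC := hq d dd Hd Md.
have I1 := IBP ACe ACD.
have I2 := IBP ACe AC_id.
have I3 := IBP ACd ACwh.
have mde : mean de = 0 by rewrite -(AC_1 ACe).
have mdwh : mean dwh = 0 by rewrite -(AC_1 ACwh).
have S1 : eps * ip de dw + ip de w = ip dwh dw.
  rewrite /de !ipBl //; lra.
have Ew1 : ip de dw = eps * ip de dd + (-1) * ip de d + md * ip de (fun _ => 1).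
  by rewrite /dw /w; apply: ip3.
have Ew2 : ip de w = eps * ip de d + (-1) * ip de D + md * ip de (fun x => x).
  by rewrite /dw /w; apply: ip3.
have Ew3 : ip dwh dw = eps * ip dwh dd + (-1) * ip dwh d + md * ip dwh (fun _ => 1).
  by rewrite /dw /w; apply: ip3.
rewrite ip_one mde in Ew1; rewrite ip_one mdwh in Ew3.
rewrite e1 mul0r in I1 I2; rewrite d1 mul0r in I3.
rewrite ip_one in I2.
have Cz : eps ^+ 2 * ip de dd + ip e d - mean e * md = 0.
  rewrite (ipC dd dwh) (ipC d dwh) in hC I3.
  nra.
have -> : (fun x => u x - p x) = (fun x => e x + d x).
  by apply/funext => x; rewrite /e /d; ring.
have -> : (fun x => du x - dp x) = (fun x => de x + dd x).
  by apply/funext => x; rewrite /de /dd; ring.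
have X1 : ip (fun x => e x + d x) (fun x => e x + d x) = ip e e + 2 * ip e d + ip d d.
  have Led := L2_add Le Ld.
  rewrite (ipDl (f:=e) (g:=d)) // (ipDr (f:=e) (g:=d)) //.
  by rewrite (ipDr (f:=e) (g:=d)) // (ipC d e); ring.
have X2 : ip (fun x => de x + dd x) (fun x => de x + dd x) = ip de de + 2 * ip de dd + ip dd dd.
  have Ldedd := L2_add Lde Ldd.
  rewrite (ipDl (f:=de) (g:=dd)) // (ipDr (f:=de) (g:=dd)) //.
  by rewrite (ipDr (f:=de) (g:=dd)) // (ipC dd de); ring.
have X3 : mean (fun x => e x + d x) = mean e + md by rewrite (meanD (f:=e) (g:=d)).
rewrite /star_norm; apply: ler_wsqrtr.
rewrite /l2sq X1 X2 X3.
have v1 := var_ge0 Ld; have v2 := ipsq_ge0 dd.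
rewrite /l2sq -/md in v1.
have eps2 : 0 <= eps ^+ 2 by exact: sqr_ge0.
nra.
Qed.

End N.

Unset Implicit Arguments.

Theorem theorem3p2 (R : realType) (eps : R) (f : R -> R) (u du : R -> R)
    (n : nat) (wh dwh uh duh : R -> R) (uI duI : R -> R) :
  0 < eps ->
  {within I01, continuous f} ->
  (* u in H^1_0 solves eps (u',v') + (u',v) = (f,v) for all v in H^1_0 *)
  H10 u du ->
  (forall v dv : R -> R, H10 v dv -> eps * ip du dv + ip du v = ip f v) ->
  (2 <= n)%N ->
  (* (w_h, u_h) in V_h x M_h solves the discrete saddle point system *)
  H10 wh dwh -> in_Vh n wh ->
  H10 uh duh -> in_Mh n uh ->
  (forall v dv : R -> R, H10 v dv -> in_Vh n v ->
     ip dwh dv + eps * ip duh dv + ip duh v = ip f v) ->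
  (forall q dq : R -> R, H10 q dq -> in_Mh n q ->
     eps * ip dq dwh + ip dq wh = 0) ->
  (* u_I in M_h is the linear interpolant of u at the nodes *)
  H10 uI duI -> in_Mh n uI ->
  (forall j : nat, (j <= n)%N -> uI (node n j) = u (node n j)) ->
  star_norm eps (fun x => u x - uh x) (fun x => du x - duh x)
    <= inf (Mh_errors eps n u du)
  /\ inf (Mh_errors eps n u du)
    <= star_norm eps (fun x => u x - uI x) (fun x => du x - duI x).
Proof.
move=> eps0 cf Hu hu n2 Hwh Vwh Huh Muh hdisc hq HuI MuI huI.
have n0 : (0 < n)%N by apply: leq_trans n2.
have lb : lbound (Mh_errors eps n u du) 0.
  by move=> x [p [dp [_ _ ->]]]; exact: sqrtr_ge0.
have ne : Mh_errors eps n u du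
    (star_norm eps (fun x => u x - uI x) (fun x => du x - duI x)).
  by exists uI, duI.
split.
- apply: lb_le_inf; first by eexists; exact: ne.
  move=> x [p [dp [Hp Mp ->]]].
  exact: (best_approx eps0 Hu hu n0 Hwh Huh Muh hdisc hq Hp Mp).
- exact: (ge_inf (ex_intro _ 0 lb)) ne.
Qed.
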